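(* Let $(A^{\mathbb N},\mathbb B_\Pi(A^{\mathbb N}),m,\sigma)$ be a Markov shift over $A=\{0,1,\dots,l\}$ and let $\mathcal P=\{P_0,\dots,P_n\}\subset\mathbb B_\Pi(A^{\mathbb N})$ be a partition of $A^{\mathbb N}$ such that: (i) each $P_i$ is either a subset of some cylinder $C_a$, $a\in A$, or satisfies $\sigma^{-1}(P_i)=P_i$ and $m(P_i)=0$; (ii) for any $P_i,P_j\in\mathcal P$, either $P_i\cap\sigma^{-1}(P_j)=C_a\cap\sigma^{-1}(P_j)$ for some $a\in A$, or $m(P_i\cap\sigma^{-1}(P_j))=0$. Then $\mathcal P$ is generating and has the Markov property.
   Context: Markov shift over $A=\{0,\dots,l\}$: given an $(l+1)\times(l+1)$ stochastic matrix $Q=(q_{ij})$ and a stationary probability vector $p$ of $Q$ with all $p_a>0$, it is $(A^{\mathbb N},\mathbb B_\Pi(A^{\mathbb N}),m,\sigma)$ with $A^{\mathbb N}$ the one-sided sequences $s=(s_0,s_1,\dots)$, $\mathbb B_\Pi$ generated by cylinders $C_{a_0\dots a_{n-1}}=\{s: s_i=a_i, i<n\}$, $(\sigma s)_j=s_{j+1}$, and $m(C_{a_0\dots a_{n-1}})=p_{a_0}q_{a_0a_1}\cdots q_{a_{n-2}a_{n-1}}$. A finite measurable partition $\mathcal G=\{G_0,\dots,G_r\}$ is generating if for every measurable $B$ there is $A'$ in the $\sigma$-algebra generated by the sets $\sigma^{-k}(G_i)$, $k\in\mathbb N_0$, with $m(A'\triangle B)=0$. A finite partition $\mathcal M=\{M_0,\dots,M_r\}$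 has the Markov property if for all $n\in\mathbb N$ and $i_0,\dots,i_n$ with $m(M_{i_0}\cap\sigma^{-1}M_{i_1}\cap\dots\cap\sigma^{-(n-1)}M_{i_{n-1}})>0$, $\frac{m(M_{i_0}\cap\sigma^{-1}M_{i_1}\cap\dots\cap\sigma^{-n}M_{i_n})}{m(M_{i_0}\cap\dots\cap\sigma^{-(n-1)}M_{i_{n-1}})}=\frac{m(M_{i_{n-1}}\cap\sigma^{-1}M_{i_n})}{m(M_{i_{n-1}})}$. *)

(* Defs.v *)
From Stdlib Require Import Reals List Arith.
Open Scope R_scope.

Definition Alph (l : nat) : Type := {a : nat | (a <= l)%nat}.
Definition sym {l : nat} (x : Alph l) : nat := proj1_sig x.

Definition Seq (l : nat) : Type := nat -> Alph l.
Definition SetS (l : nat) : Type := Seq l -> Prop.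

Definition shift {l : nat} (k : nat) (s : Seq l) : Seq l := fun j => s (j + k)%nat.
Definition sigma {l : nat} (s : Seq l) : Seq l := shift 1 s.

Definition preim_shift {l : nat} (k : nat) (E : SetS l) : SetS l :=
  fun s => E (shift k s).

Definition inter {l : nat} (E F : SetS l) : SetS l := fun s => E s /\ F s.
Definition symdiff {l : nat} (E F : SetS l) : SetS l :=
  fun s => (E s /\ ~ F s) \/ (F s /\ ~ E s).

Inductive gen_sigma {l : nat} (F : SetS l -> Prop) : SetS l -> Prop :=
| gs_base : forall E, F E -> gen_sigma F E
| gs_compl : forall E, gen_sigma F E -> gen_sigma F (fun s => ~ E s)
| gs_union : forall E : nat -> SetS l, (forall k, gen_sigma F (E k)) ->
    gen_sigma F (fun s => exists k, E k s).

Definition cyl {l : nat} (w : list nat) : SetS l :=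
  fun s => forall i, (i < length w)%nat -> sym (s i) = nth i w 0%nat.

Definition is_cylinder {l : nat} (E : SetS l) : Prop :=
  exists w : list nat, forall s, E s <-> cyl w s.

Definition measurable {l : nat} (E : SetS l) : Prop := gen_sigma (@is_cylinder l) E.

Definition stochastic (l : nat) (Q : nat -> nat -> R) : Prop :=
  (forall i j, (i <= l)%nat -> (j <= l)%nat -> 0 <= Q i j) /\
  (forall i, (i <= l)%nat -> sum_f_R0 (fun j => Q i j) l = 1).

Definition stationary_pos (l : nat) (Q : nat -> nat -> R) (p : nat -> R) : Prop :=
  (forall a, (a <= l)%nat -> 0 < p a) /\
  sum_f_R0 p l = 1 /\
  (forall j, (j <= l)%nat -> sum_f_R0 (fun i => p i * Q i j) l = p j).

Fixpoint chain (Q : nat -> nat -> R) (a : nat) (w : list nat) : R :=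
  match w with
  | nil => 1
  | b :: w' => Q a b * chain Q b w'
  end.

Definition cyl_weight (Q : nat -> nat -> R) (p : nat -> R) (w : list nat) : R :=
  match w with
  | nil => 1
  | a :: w' => p a * chain Q a w'
  end.

(* m is a (countably additive, nonnegative) measure on B_Pi with the Markov
   cylinder values; by uniqueness of extension this determines m on B_Pi. *)
Definition markov_measure (l : nat) (Q : nat -> nat -> R) (p : nat -> R)
  (m : SetS l -> R) : Prop :=
  (forall E, measurable E -> 0 <= m E) /\
  (forall E : nat -> SetS l,
      (forall k, measurable (E k)) ->
      (forall i j, i <> j -> forall s, E i s -> E j s -> False) ->
      infinite_sum (fun k => m (E k)) (m (fun s => exists k, E k s))) /\
  (forall w : list nat, w <> nil -> (forall a, In a w -> (a <= l)%nat) ->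
      m (cyl w) = cyl_weight Q p w).

Definition meas_partition {l : nat} (P : nat -> SetS l) (n : nat) : Prop :=
  (forall i, (i <= n)%nat -> measurable (P i)) /\
  (forall i j, (i <= n)%nat -> (j <= n)%nat -> i <> j ->
     forall s, P i s -> P j s -> False) /\
  (forall s, exists i, (i <= n)%nat /\ P i s).

Definition generating {l : nat} (m : SetS l -> R) (P : nat -> SetS l) (n : nat) : Prop :=
  forall B, measurable B ->
    exists A', gen_sigma (fun E => exists k i, (i <= n)%nat /\
                             forall s, E s <-> preim_shift k (P i) s) A'
            /\ m (symdiff A' B) = 0.

Definition itin {l : nat} (P : nat -> SetS l) (idx : nat -> nat) (N : nat) : SetS l :=
  fun s => forall t, (t < N)%nat -> P (idx t) (shift t s).

Definition markov_property {l : nat} (m : SetS l -> R) (P : nat -> SetS l) (n : nat) : Prop :=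
  forall (N : nat) (idx : nat -> nat),
    (1 <= N)%nat ->
    (forall t, (t <= N)%nat -> (idx t <= n)%nat) ->
    0 < m (itin P idx N) ->
    m (itin P idx (S N)) / m (itin P idx N)
    = m (inter (P (idx (N - 1)%nat)) (preim_shift 1 (P (idx N))))
      / m (P (idx (N - 1)%nat)).

(* Main.v *)
Require Import Defs.
From Stdlib Require Import Reals List Arith.
From Stdlib Require Import Lia Lra Classical FunctionalExtensionality PropExtensionality ClassicalEpsilon.
Open Scope R_scope.

Lemma set_ext {l : nat} (A B : SetS l) : (forall s, A s <-> B s) -> A = B.
Proof. intros H; apply functional_extensionality; intro s; apply propositional_extensionality; auto. Qed.

Lemma gs_ext {l : nat} (F : SetS l -> Prop) (A B : SetS l) :
  gen_sigma F A -> (forall s, A s <-> B s) -> gen_sigma F B.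
Proof. intros H E; rewrite <- (set_ext _ _ E); exact H. Qed.

Lemma gs_union2 {l : nat} (F : SetS l -> Prop) (A B : SetS l) :
  gen_sigma F A -> gen_sigma F B -> gen_sigma F (fun s => A s \/ B s).
Proof.
  intros HA HB.
  apply (gs_ext F (fun s => exists k, (match k with 0%nat => A | _ => B end) s)).
  - apply gs_union; intros [|k]; auto.
  - intros s; split; [intros [[|k] H]; auto | intros [H|H]; [exists 0%nat|exists 1%nat]; auto].
Qed.

Lemma gs_inter {l : nat} (F : SetS l -> Prop) (A B : SetS l) :
  gen_sigma F A -> gen_sigma F B -> gen_sigma F (fun s => A s /\ B s).
Proof.
  intros HA HB.
  apply (gs_ext F (fun s => ~ ((fun s => ~ A s) s \/ (fun s => ~ B s) s))).
  - apply gs_compl, gs_union2; apply gs_compl; auto.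
  - intros s; simpl; split; [intros H; apply NNPP; tauto | tauto].
Qed.

Lemma gs_full {l : nat} (F : SetS l -> Prop) (A : SetS l) :
  gen_sigma F A -> gen_sigma F (fun _ => True).
Proof.
  intros HA; apply (gs_ext F (fun s => A s \/ ~ A s)).
  - apply gs_union2; auto; apply gs_compl; auto.
  - intros s; split; auto; intros _; apply classic.
Qed.

Lemma gs_empty {l : nat} (F : SetS l -> Prop) (A : SetS l) :
  gen_sigma F A -> gen_sigma F (fun _ => False).
Proof.
  intros HA; apply (gs_ext F (fun s => ~ True)).
  - apply gs_compl; eapply gs_full; eauto.
  - intros s; tauto.
Qed.

Lemma gs_cond {l : nat} (F : SetS l -> Prop) (A : SetS l) (C : Prop) :
  gen_sigma F A -> gen_sigma F (fun s => C /\ A s).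
Proof.
  intros HA; destruct (classic C) as [HC|HC].
  - apply (gs_ext F A); auto; intros s; tauto.
  - apply (gs_ext F (fun _ => False)); [eapply gs_empty; eauto| intros s; tauto].
Qed.

Lemma gs_finunion {l : nat} (F : SetS l -> Prop) (E : nat -> SetS l) (K : nat) :
  gen_sigma F (E 0%nat) -> (forall k, (k < K)%nat -> gen_sigma F (E k)) ->
  gen_sigma F (fun s => exists k, (k < K)%nat /\ E k s).
Proof.
  intros H0 H.
  apply (gs_ext F (fun s => exists k, (fun k s => (k < K)%nat /\ E k s) k s)).
  - apply gs_union; intros k; destruct (lt_dec k K) as [h|h].
    + apply (gs_ext F (E k)); auto; intros s; tauto.
    + apply (gs_ext F (fun _ => False)); [eapply gs_empty; eauto| intros s; tauto].
  - intros s; tauto.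
Qed.

Lemma gs_fininter {l : nat} (F : SetS l -> Prop) (E : nat -> SetS l) (K : nat) :
  gen_sigma F (E 0%nat) -> (forall k, (k < K)%nat -> gen_sigma F (E k)) ->
  gen_sigma F (fun s => forall k, (k < K)%nat -> E k s).
Proof.
  intros H0 H.
  apply (gs_ext F (fun s => ~ exists k, (k < K)%nat /\ (fun s => ~ E k s) s)).
  - apply gs_compl, gs_finunion; [apply gs_compl; auto|intros; apply gs_compl; auto].
  - intros s; split.
    + intros Hn k Hk; apply NNPP; intros Hc; apply Hn; eauto.
    + intros Ha [k [Hk Hc]]; apply Hc; auto.
Qed.

Lemma sym_le {l : nat} (x : Alph l) : (sym x <= l)%nat.
Proof. destruct x; simpl; auto. Qed.

Lemma shift_shift {l : nat} (k j : nat) (s : Seq l) : shift k (shift j s) = shift (k + j) s.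
Proof. unfold shift; apply functional_extensionality; intro x; f_equal; lia. Qed.

Lemma shift0 {l : nat} (s : Seq l) : shift 0 s = s.
Proof. unfold shift; apply functional_extensionality; intro x; f_equal; lia. Qed.

Lemma cyl_app {l : nat} (u v : list nat) (s : Seq l) :
  cyl u s /\ cyl v (shift (length u) s) <-> cyl (u ++ v) s.
Proof.
  unfold cyl, shift; split.
  - intros [Hu Hv] i Hi; rewrite length_app in Hi.
    destruct (lt_dec i (length u)).
    + rewrite app_nth1; auto.
    + rewrite app_nth2 by lia. specialize (Hv (i - length u)%nat ltac:(lia)).
      replace (i - length u + length u)%nat with i in Hv by lia; auto.
  - intros H; split.
    + intros i Hi; rewrite <- (app_nth1 u v 0%nat Hi); apply H; rewrite length_app; lia.
    + intros i Hi. specialize (H (i + length u)%nat ltac:(rewrite length_app; lia)).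
      rewrite app_nth2 in H by lia. replace (i + length u - length u)%nat with i in H by lia; auto.
Qed.

Lemma cyl_nil {l : nat} (s : Seq l) : cyl nil s.
Proof. intros i Hi; simpl in Hi; lia. Qed.

Lemma cyl_one {l : nat} (a : nat) (s : Seq l) : cyl (a :: nil) s <-> sym (s 0%nat) = a.
Proof.
  unfold cyl; split.
  - intros H; apply (H 0%nat); simpl; lia.
  - intros H [|i] Hi; simpl in *; auto; lia.
Qed.

Lemma cyl_bad {l : nat} (v : list nat) (s : Seq l) :
  (exists x, In x v /\ (l < x)%nat) -> ~ cyl v s.
Proof.
  intros [x [Hx Hl]] H. destruct (In_nth v x 0%nat Hx) as [i [Hi Hn]].
  specialize (H i Hi); rewrite Hn in H. pose proof (sym_le (s i)); lia.
Qed.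

Lemma meas_cyl {l : nat} (w : list nat) : measurable (@cyl l w).
Proof. apply gs_base; exists w; tauto. Qed.

Lemma meas_full {l : nat} : measurable (fun _ : Seq l => True).
Proof. eapply gs_full, (meas_cyl nil). Qed.

Lemma meas_empty {l : nat} : measurable (fun _ : Seq l => False).
Proof. eapply gs_empty, (meas_cyl nil). Qed.

Lemma meas_G {l : nat} (k : nat) : forall v w,
  measurable (fun s : Seq l => cyl v s /\ cyl w (shift (length v + k) s)).
Proof.
  induction k as [|k IH]; intros v w.
  - apply (gs_ext _ (cyl (v ++ w))); [apply meas_cyl|].
    intros s; rewrite Nat.add_0_r, cyl_app; tauto.
  - apply (gs_ext _ (fun s => exists b, (fun b s => cyl (v ++ b :: nil) s /\
         cyl w (shift (length (v ++ b :: nil) + k) s)) b s)).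
    + apply gs_union; intros b; apply IH.
    + intros s; split.
      * intros [b [H1 H2]]; rewrite <- cyl_app in H1; destruct H1 as [H1 _]; split; auto.
        rewrite length_app in H2; simpl in H2. replace (length v + 1 + k)%nat with (length v + S k)%nat in H2 by lia; auto.
      * intros [H1 H2]; exists (sym (s (length v))); split.
        -- rewrite <- cyl_app; split; auto. apply cyl_one. unfold shift; simpl; auto.
        -- rewrite length_app; simpl. replace (length v + 1 + k)%nat with (length v + S k)%nat by lia; auto.
Qed.

Lemma meas_preim {l : nat} (k : nat) (E : SetS l) : measurable E -> measurable (preim_shift k E).
Proof.
  intros H; induction H as [E [w Hw]| E _ IH | E _ IH].
  - apply (gs_ext _ _ _ (meas_G k nil w)). intros s; unfold preim_shift; simpl; rewrite Hw.
    split; [tauto| intros; split; auto; apply cyl_nil].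
  - apply (gs_ext _ _ _ (gs_compl _ _ IH)); unfold preim_shift; tauto.
  - apply (gs_ext _ _ _ (gs_union _ _ IH)); unfold preim_shift; tauto.
Qed.

Lemma meas_inter {l : nat} (A B : SetS l) : measurable A -> measurable B -> measurable (fun s => A s /\ B s).
Proof. apply gs_inter. Qed.
Lemma meas_union2 {l : nat} (A B : SetS l) : measurable A -> measurable B -> measurable (fun s => A s \/ B s).
Proof. apply gs_union2. Qed.
Lemma meas_compl {l : nat} (A : SetS l) : measurable A -> measurable (fun s => ~ A s).
Proof. apply gs_compl. Qed.

Definition disj {l : nat} (E : nat -> SetS l) :=
  forall i j, i <> j -> forall s, E i s -> E j s -> False.

Definition cadd {l : nat} (nu : SetS l -> R) :=
  nu (fun _ => False) = 0 /\
  forall E : nat -> SetS l, (forall k, measurable (E k)) -> disj E ->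
    infinite_sum (fun k => nu (E k)) (nu (fun s => exists k, E k s)).

Lemma const_sum_zero (x : R) : infinite_sum (fun _ => x) x -> x = 0.
Proof.
  intros H. destruct (Req_dec x 0) as [|hx]; auto. exfalso.
  destruct (H (Rabs x / 2)) as [N HN]. { pose proof (Rabs_pos_lt x hx); lra. }
  pose proof (HN N (le_n N)) as A. pose proof (HN (S N) (le_S _ _ (le_n N))) as B.
  unfold R_dist in *. simpl in B.
  assert (Rabs x <= Rabs (sum_f_R0 (fun _ => x) N + x - x) + Rabs (sum_f_R0 (fun _ => x) N - x)).
  { replace x with ((sum_f_R0 (fun _ => x) N + x - x) - (sum_f_R0 (fun _ => x) N - x)) at 1 by ring.
    eapply Rle_trans; [apply Rabs_triang|]. rewrite Rabs_Ropp; lra. }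
  lra.
Qed.

Lemma sum_zero (f : nat -> R) : (forall k, f k = 0) -> infinite_sum f 0.
Proof.
  intros Hf eps He; exists 0%nat; intros n _.
  assert (sum_f_R0 f n = 0) as ->.
  { induction n; simpl; rewrite Hf; [|rewrite IHn]; ring. }
  unfold R_dist; rewrite Rminus_0_r, Rabs_R0; auto.
Qed.

Lemma cadd_m (l : nat) Q p (m : SetS l -> R) : markov_measure l Q p m -> cadd m.
Proof.
  intros [Hpos [Hadd _]]. split; [|exact Hadd].
  apply const_sum_zero.
  pose proof (Hadd (fun _ => fun _ => False) (fun _ => meas_empty) ltac:(intros i j _ s h; destruct h)) as H.
  simpl in H. replace (fun s : Seq l => exists _ : nat, False) with (fun _ : Seq l => False) in H; auto.
  apply set_ext; intros s; split; [tauto| intros [_ []]].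
Qed.

Lemma cadd_add2 {l : nat} (nu : SetS l -> R) (A B : SetS l) :
  cadd nu -> measurable A -> measurable B -> (forall s, A s -> B s -> False) ->
  nu (fun s => A s \/ B s) = nu A + nu B.
Proof.
  intros [H0 Hc] HA HB Hd.
  set (E := fun k : nat => match k with 0%nat => A | 1%nat => B | _ => (fun _ : Seq l => False) end).
  assert (HE : forall k, measurable (E k)) by (intros [|[|k]]; simpl; auto; apply meas_empty).
  assert (HD : disj E).
  { intros [|[|i]] [|[|j]] hij s; simpl; intros; try tauto; try lia; eauto. }
  pose proof (Hc E HE HD) as HS.
  assert (HS2 : infinite_sum (fun k => nu (E k)) (nu A + nu B)).
  { intros eps He; exists 1%nat; intros n Hn.
    assert (forall n, sum_f_R0 (fun k => nu (E k)) (S n) = nu A + nu B) as Hs.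
    { induction n0; simpl in *; auto. rewrite IHn0, H0; ring. }
    destruct n; [lia|]; rewrite Hs; unfold R_dist; rewrite Rminus_diag, Rabs_R0; auto. }
  rewrite <- (uniqueness_sum _ _ _ HS HS2). f_equal. apply set_ext; intros s; split.
  - intros [H|H]; [exists 0%nat|exists 1%nat]; auto.
  - intros [[|[|k]] H]; simpl in H; tauto.
Qed.

Lemma m_mono (l : nat) Q p (m : SetS l -> R) (A B : SetS l) : markov_measure l Q p m ->
  measurable A -> measurable B -> (forall s, A s -> B s) -> m A <= m B.
Proof.
  intros Hm HA HB Hs. pose proof (cadd_m _ _ _ _ Hm) as Hc.
  assert (m B = m (fun s => A s \/ (B s /\ ~ A s))) as ->.
  { f_equal; apply set_ext; intros s; split; [intros; destruct (classic (A s)); tauto | intros [h|h]; auto; tauto]. }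
  rewrite (cadd_add2 m); auto.
  - pose proof ((proj1 Hm) (fun s => B s /\ ~ A s) ltac:(apply meas_inter; auto; apply meas_compl; auto)); lra.
  - apply meas_inter; auto; apply meas_compl; auto.
  - tauto.
Qed.

Lemma m_nonneg (l : nat) Q p (m : SetS l -> R) (A : SetS l) : markov_measure l Q p m ->
  measurable A -> 0 <= m A.
Proof. intros Hm; apply Hm. Qed.

Lemma cadd_scale {l : nat} (nu : SetS l -> R) (c : R) : cadd nu -> cadd (fun E => c * nu E).
Proof.
  intros [H0 Hc]; split; [rewrite H0; ring|].
  intros E HE HD. pose proof (Hc E HE HD) as H.
  assert (Hcst : Un_cv (fun _ => c) c).
  { intros eps He; exists 0%nat; intros; unfold R_dist; rewrite Rminus_diag, Rabs_R0; auto. }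
  pose proof (CV_mult _ _ _ _ Hcst H) as HM. intros eps He; destruct (HM eps He) as [N HN].
  exists N; intros n Hn. specialize (HN n Hn). cbv beta in HN. rewrite scal_sum in HN.
  replace (fun i => c * nu (E i)) with (fun i => nu (E i) * c); auto.
  apply functional_extensionality; intros; ring.
Qed.

Lemma cadd_T {l : nat} (nu : SetS l -> R) (G : SetS l) (k : nat) : cadd nu -> measurable G ->
  cadd (fun E => nu (fun s => G s /\ E (shift k s))).
Proof.
  intros [H0 Hc] HG; split.
  - rewrite <- H0; f_equal; apply set_ext; tauto.
  - intros E HE HD.
    pose proof (Hc (fun j => fun s => G s /\ E j (shift k s))) as H.
    replace (fun s => G s /\ (fun s0 => exists j, E j s0) (shift k s)) with
            (fun s => exists j, (fun j s => G s /\ E j (shift k s)) j s).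
    + apply H.
      * intros j; apply meas_inter; auto; apply (meas_preim k (E j)); auto.
      * intros i j hij s [_ A] [_ B]; eapply HD; eauto.
    + apply set_ext; intros s; split; [intros [j [A B]]; split; eauto | intros [A [j B]]; eauto].
Qed.

Definition disjz {l : nat} (E : nat -> SetS l) : nat -> SetS l :=
  fun k s => E k s /\ ~ (exists j, (j < k)%nat /\ E j s).

Lemma disjz_disj {l : nat} (E : nat -> SetS l) : disj (disjz E).
Proof.
  intros i j hij s [A B] [C D].
  destruct (Nat.lt_gt_cases i j) as [[h|h] _]; auto; [apply D|apply B]; eauto.
Qed.

Lemma disjz_union {l : nat} (E : nat -> SetS l) (s : Seq l) :
  (exists k, disjz E k s) <-> (exists k, E k s).
Proof.
  split; [intros [k [A _]]; eauto|].
  intros [k Hk]. induction k as [k IH] using (well_founded_induction lt_wf).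
  destruct (classic (exists j, (j < k)%nat /\ E j s)) as [[j [hj ej]]|hn].
  - eapply IH; eauto.
  - exists k; split; auto.
Qed.


Lemma disjz_meas {l : nat} (E : nat -> SetS l) : (forall k, measurable (E k)) ->
  forall k, measurable (disjz E k).
Proof.
  intros HE k; unfold disjz; apply meas_inter; auto. apply meas_compl.
  apply (gs_finunion _ E k (HE 0%nat)); intros; apply HE.
Qed.

Lemma null_union (l : nat) Q p (m : SetS l -> R) (E : nat -> SetS l) : markov_measure l Q p m ->
  (forall k, measurable (E k)) -> (forall k, m (E k) = 0) -> m (fun s => exists k, E k s) = 0.
Proof.
  intros Hm HE H0. pose proof (cadd_m _ _ _ _ Hm) as [_ Hc].
  assert (Hz : forall k, m (disjz E k) = 0).
  { intros k. pose proof (m_mono _ _ _ _ (disjz E k) (E k) Hm (disjz_meas E HE k) (HE k) ltac:(intros s [h _]; auto)).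
    pose proof (m_nonneg _ _ _ _ _ Hm (disjz_meas E HE k)). rewrite H0 in H; lra. }
  pose proof (Hc (disjz E) (disjz_meas E HE) (disjz_disj E)) as HS.
  replace (fun s => exists k, E k s) with (fun s => exists k, disjz E k s).
  - eapply uniqueness_sum; eauto; apply sum_zero; auto.
  - apply set_ext; intros; apply disjz_union.
Qed.

Definition lam {l : nat} (D : SetS l -> Prop) :=
  D (fun _ => True) /\ (forall E, D E -> D (fun s => ~ E s)) /\
  (forall E : nat -> SetS l, (forall k, D (E k)) -> disj E -> D (fun s => exists k, E k s)).

Definition Lgen {l : nat} (E : SetS l) :=
  forall D, lam D -> (forall C, is_cylinder C -> D C) -> D E.

Lemma L_ext {l : nat} (A B : SetS l) : Lgen A -> (forall s, A s <-> B s) -> Lgen B.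
Proof. intros H E; rewrite <- (set_ext _ _ E); exact H. Qed.

Lemma L_lam {l : nat} : lam (@Lgen l).
Proof.
  split; [|split].
  - intros D HD _; apply HD.
  - intros E HE D HD HC; apply HD, HE; auto.
  - intros E HE Hd D HD HC; apply HD; auto; intros k; apply HE; auto.
Qed.

Lemma L_cyl {l : nat} (C : SetS l) : is_cylinder C -> Lgen C.
Proof. intros H D _ HC; auto. Qed.

Lemma cyl_cons {l : nat} (a : nat) (v : list nat) (s : Seq l) :
  cyl (a :: v) s <-> sym (s 0%nat) = a /\ cyl v (shift 1 s).
Proof. pose proof (cyl_app (a :: nil) v s) as H1; pose proof (cyl_one a s) as H2; simpl in H1; tauto. Qed.

Lemma cyl_inter {l : nat} (v : list nat) : forall w, exists z, forall s : Seq l,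
  cyl v s /\ cyl w s <-> cyl z s.
Proof.
  induction v as [|a v IH]; intros w.
  - exists w; intros s; split; [tauto| split; auto; apply cyl_nil].
  - destruct w as [|b w].
    + exists (a :: v); intros s; split; [tauto| split; auto; apply cyl_nil].
    + destruct (Nat.eq_dec a b) as [<-|hab].
      * destruct (IH w) as [z Hz]. exists (a :: z); intros s.
        rewrite !cyl_cons, <- Hz; tauto.
      * exists (S l :: nil); intros s; rewrite !cyl_cons; split.
        -- intros [[h1 _] [h2 _]]; congruence.
        -- intros [h _]; pose proof (sym_le (s 0%nat)); lia.
Qed.

Lemma cyl_pi {l : nat} (A B : SetS l) : is_cylinder A -> is_cylinder B ->
  is_cylinder (fun s => A s /\ B s).
Proof.
  intros [v Hv] [w Hw]; destruct (@cyl_inter l v w) as [z Hz]; exists z; intros s.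
  rewrite Hv, Hw; apply Hz.
Qed.

Lemma L_full {l : nat} : @Lgen l (fun _ => True).
Proof. apply L_lam. Qed.

Lemma L_empty {l : nat} : @Lgen l (fun _ => False).
Proof. apply (L_ext (fun s => ~ True)); [apply L_lam, L_full| tauto]. Qed.

Lemma L_union2 {l : nat} (A B : SetS l) : Lgen A -> Lgen B -> (forall s, A s -> B s -> False) ->
  Lgen (fun s => A s \/ B s).
Proof.
  intros HA HB Hd.
  set (E := fun k : nat => match k with 0%nat => A | 1%nat => B | _ => (fun _ : Seq l => False) end).
  apply (L_ext (fun s => exists k, E k s)).
  - apply L_lam.
    + intros [|[|k]]; simpl; auto; apply L_empty.
    + intros [|[|i]] [|[|j]] hij s; simpl; intros; try tauto; try lia; eauto.
  - intros s; split.
    + intros [[|[|k]] H]; simpl in H; tauto.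
    + intros [H|H]; [exists 0%nat|exists 1%nat]; auto.
Qed.

Lemma lam_int {l : nat} (A : SetS l) : Lgen A -> lam (fun E => Lgen (fun s => E s /\ A s)).
Proof.
  intros HA; split; [|split].
  - apply (L_ext A); auto; tauto.
  - intros E HE. apply (L_ext (fun s => ~ ((fun s => ~ A s) s \/ (fun s => E s /\ A s) s))).
    + apply L_lam, L_union2; auto; [apply L_lam; auto| tauto].
    + intros s; split; [intros h; split; [intros he|apply NNPP]; tauto| tauto].
  - intros E HE Hd. apply (L_ext (fun s => exists k, (fun k s => E k s /\ A s) k s)).
    + apply L_lam; auto. intros i j hij s [h1 _] [h2 _]; eapply Hd; eauto.
    + intros s; split; [intros [k [h1 h2]]; eauto| intros [[k h1] h2]; eauto].
Qed.

Lemma L_inter_cyl {l : nat} (E C : SetS l) : Lgen E -> is_cylinder C -> Lgen (fun s => E s /\ C s).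
Proof.
  intros HE HC. apply (HE (fun E => Lgen (fun s => E s /\ C s))).
  - apply lam_int, L_cyl; auto.
  - intros C' HC'; apply L_cyl, cyl_pi; auto.
Qed.

Lemma L_inter {l : nat} (E A : SetS l) : Lgen E -> Lgen A -> Lgen (fun s => E s /\ A s).
Proof.
  intros HE HA. apply (HE (fun E => Lgen (fun s => E s /\ A s))).
  - apply lam_int; auto.
  - intros C HC; apply (L_ext (fun s => A s /\ C s)); [apply L_inter_cyl; auto| tauto].
Qed.

Lemma L_fininter {l : nat} (E : nat -> SetS l) : (forall k, Lgen (E k)) ->
  forall K, Lgen (fun s => forall j, (j < K)%nat -> E j s).
Proof.
  intros HE K; induction K as [|K IH].
  - apply (L_ext (fun _ => True)); [apply L_full| intros s; split; auto; intros _ j h; lia].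
  - apply (L_ext (fun s => (forall j, (j < K)%nat -> E j s) /\ E K s)).
    + apply L_inter; auto.
    + intros s; split.
      * intros [h1 h2] j hj; destruct (Nat.eq_dec j K) as [->|]; auto; apply h1; lia.
      * intros h; split; auto.
Qed.

Lemma L_union {l : nat} (E : nat -> SetS l) : (forall k, Lgen (E k)) -> Lgen (fun s => exists k, E k s).
Proof.
  intros HE. apply (L_ext (fun s => exists k, disjz E k s)); [|apply disjz_union].
  apply L_lam; [|apply disjz_disj]. intros k.
  apply (L_ext (fun s => E k s /\ (fun s => forall j, (j < k)%nat -> (fun s => ~ E j s) s) s)).
  - apply L_inter; auto. apply L_fininter. intros j; apply L_lam; auto.
  - intros s; unfold disjz; split.
    + intros [h1 h2]; split; auto; intros [j [hj ej]]; exact (h2 j hj ej).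
    + intros [h1 h2]; split; auto; intros j hj ej; apply h2; eauto.
Qed.

Lemma meas_L {l : nat} (E : SetS l) : measurable E -> Lgen E.
Proof.
  intros H; induction H as [E HE|E _ IH|E _ IH].
  - apply L_cyl; auto.
  - apply L_lam; auto.
  - apply L_union; auto.
Qed.

Lemma dynkin {l : nat} (D : SetS l -> Prop) (E : SetS l) : lam D ->
  (forall C, is_cylinder C -> D C) -> measurable E -> D E.
Proof. intros HD HC HE; apply (meas_L E HE); auto. Qed.

Lemma uniq_meas {l : nat} (nu1 nu2 : SetS l -> R) : cadd nu1 -> cadd nu2 ->
  (forall C, is_cylinder C -> nu1 C = nu2 C) -> forall E, measurable E -> nu1 E = nu2 E.
Proof.
  intros H1 H2 HC E HE.
  apply (dynkin (fun E => measurable E /\ nu1 E = nu2 E)); auto.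
  - split; [|split].
    + assert (Hf : (fun _ : Seq l => True) = cyl nil) by (apply set_ext; intros s; split; auto; intros; apply cyl_nil).
      rewrite Hf; split; [apply meas_cyl| apply HC; exists nil; tauto].
    + intros A [HA Heq]; split; [apply meas_compl; auto|].
      assert (Hf : forall nu : SetS l -> R, cadd nu -> nu (fun s => ~ A s) = nu (fun _ => True) - nu A).
      { intros nu Hnu. rewrite <- (set_ext (fun s => A s \/ ~ A s) (fun _ => True)).
        - rewrite (cadd_add2 nu); auto. ring. apply meas_compl; auto.
        - intros s; split; auto; intros; apply classic. }
      rewrite (Hf nu1 H1), (Hf nu2 H2), Heq. f_equal.
      assert (Hf' : (fun _ : Seq l => True) = cyl nil) by (apply set_ext; intros s; split; auto; intros; apply cyl_nil).
      rewrite Hf'; apply HC; exists nil; tauto.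
    + intros F HF Hd. assert (HFm : forall k, measurable (F k)) by (intros k; apply HF).
      split; [apply gs_union; auto|].
      eapply uniqueness_sum; [apply H1; auto|].
      replace (fun k => nu1 (F k)) with (fun k => nu2 (F k)); [apply H2; auto|].
      apply functional_extensionality; intros k; symmetry; apply HF.
  - intros C HC'; split; [apply gs_base; auto| apply HC; auto].
Qed.

Lemma last_cons (w : list nat) (b a : nat) : last (b :: w) a = last w b.
Proof. revert b a; induction w as [|x w IH]; intros b a; simpl; auto. destruct w as [|y w]; auto. transitivity (last (y :: w) x). exact (IH x a). symmetry; exact (IH x b). Qed.

Lemma chain_app (Q : nat -> nat -> R) (w u : list nat) : forall a,
  chain Q a (w ++ u) = chain Q a w * chain Q (last w a) u.
Proof.
  induction w as [|b w IH]; intros a; cbn [chain app]; [simpl; ring|].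
  rewrite IH, last_cons. ring.
Qed.

Lemma m_empty (l : nat) Q p (m : SetS l -> R) : markov_measure l Q p m -> m (fun _ => False) = 0.
Proof. intros Hm; apply (cadd_m _ _ _ _ Hm). Qed.

Lemma m_empty' (l : nat) Q p (m : SetS l -> R) (A : SetS l) : markov_measure l Q p m ->
  (forall s, ~ A s) -> m A = 0.
Proof.
  intros Hm H; rewrite <- (m_empty _ _ _ _ Hm); f_equal; apply set_ext; intros s; split; [apply H|tauto].
Qed.

Lemma keyK (l : nat) Q p (m : SetS l -> R) (a0 : nat) (w' : list nat) (a : nat) :
  markov_measure l Q p m -> (forall x, 0 < p x) ->
  (forall x, In x (a0 :: w') -> (x <= l)%nat) -> (a <= l)%nat ->
  forall E, measurable E ->
  m (fun s => cyl (a0 :: w') s /\ (cyl (a :: nil) (shift (length (a0 :: w')) s) /\ E (shift (length (a0 :: w')) s)))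
  = (p a0 * chain Q a0 w' * Q (last w' a0) a / p a) * m (fun s => cyl (a :: nil) s /\ E s).
Proof.
  intros Hm Hp Hw Ha E HE.
  set (w := a0 :: w'). set (k := length w). set (c := p a0 * chain Q a0 w' * Q (last w' a0) a / p a).
  pose proof (cadd_m _ _ _ _ Hm) as Hc.
  set (f1 := fun X => m (fun s => cyl w s /\ X (shift k s))).
  assert (Hf1 : cadd f1) by (apply cadd_T; auto; apply meas_cyl).
  set (nu1 := fun E => f1 (fun s => cyl (a :: nil) s /\ E (shift 0 s))).
  set (nu2 := fun E => c * m (fun s => cyl (a :: nil) s /\ E (shift 0 s))).
  assert (H1 : cadd nu1) by (apply cadd_T; auto; apply meas_cyl).
  assert (H2 : cadd nu2) by (apply cadd_scale, cadd_T; auto; apply meas_cyl).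
  assert (Heq : nu1 E = nu2 E).
  { apply uniq_meas; auto. intros C [v Hv]. rewrite (set_ext _ _ Hv).
    unfold nu1, nu2, f1.
    destruct (classic (exists x, In x v /\ (l < x)%nat)) as [Hb|Hg].
    - rewrite !(m_empty' _ _ _ _ _ Hm); [ring| |];
        intros s; rewrite ?shift0; intros H; first [apply (cyl_bad v s Hb); tauto | apply (cyl_bad v (shift k s) Hb); tauto].
    - assert (Hv' : forall x, In x v -> (x <= l)%nat).
      { intros x hx; destruct (Nat.le_gt_cases x l); auto; exfalso; apply Hg; eauto. }
      destruct (match v with nil => true | b :: _ => Nat.eqb b a end) eqn:Hcase.
      + set (v'' := tl v).
        assert (Hu : forall t : Seq l, cyl (a :: nil) t /\ cyl v t <-> cyl (a :: v'') t).
        { intros t; destruct v as [|b v0]; unfold v''; simpl.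
          - split; [tauto| intros h; split; auto; apply cyl_nil].
          - apply Nat.eqb_eq in Hcase; subst b. rewrite !cyl_cons; pose proof (@cyl_nil l (shift 1 t)); tauto. }
        assert (Hv'' : forall x, In x v'' -> (x <= l)%nat).
        { intros x hx; apply Hv'; destruct v; simpl in *; auto. }
        assert (E1 : (fun s : Seq l => cyl w s /\ cyl (a :: nil) (shift k s) /\ cyl v (shift 0 (shift k s))) = cyl (w ++ a :: v'')).
        { apply set_ext; intros s; rewrite shift0, Hu, <- cyl_app; unfold k; tauto. }
        assert (E2 : (fun s : Seq l => cyl (a :: nil) s /\ cyl v (shift 0 s)) = cyl (a :: v'')).
        { apply set_ext; intros s; rewrite shift0, Hu; tauto. }
        rewrite E1, E2.
        rewrite (proj2 (proj2 Hm) (w ++ a :: v'')), (proj2 (proj2 Hm) (a :: v'')).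
        * unfold w, c; simpl. rewrite chain_app. simpl. field. apply Rgt_not_eq, Hp.
        * discriminate.
        * intros x [hx|hx]; subst; auto.
        * destruct w'; discriminate.
        * intros x hx; apply in_app_or in hx; destruct hx as [hx|[hx|hx]]; subst; auto.
      + destruct v as [|b v0]; try discriminate; apply Nat.eqb_neq in Hcase.
        assert (Hn : forall t : Seq l, cyl (a :: nil) t -> cyl (b :: v0) t -> False).
        { intros t h1 h2; rewrite cyl_one in h1; rewrite cyl_cons in h2; destruct h2; congruence. }
        rewrite !(m_empty' _ _ _ _ _ Hm); [ring| |];
        intros s; rewrite ?shift0; intros H;
        first [apply (Hn s); tauto | apply (Hn (shift k s)); tauto]. }
  unfold nu1, nu2, f1 in Heq. 
  rewrite (set_ext (fun s => cyl (a :: nil) s /\ E (shift 0 s)) (fun s => cyl (a :: nil) s /\ E s)) in Heq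
    by (intros s; rewrite shift0; tauto).
  rewrite <- Heq. f_equal. apply set_ext; intros s; rewrite shift0; unfold k; tauto.
Qed.

Lemma inv_iter {l : nat} (A : SetS l) : (forall s, preim_shift 1 A s <-> A s) ->
  forall j s, A (shift j s) -> A s.
Proof.
  intros HA j; induction j as [|j IH]; intros s H.
  - rewrite shift0 in H; auto.
  - apply IH. apply HA. unfold preim_shift. rewrite shift_shift. exact H.
Qed.

Definition FP {l : nat} (P : nat -> SetS l) (n : nat) : SetS l -> Prop :=
  fun E => exists k i, (i <= n)%nat /\ forall s, E s <-> preim_shift k (P i) s.

Lemma genP_meas {l : nat} (P : nat -> SetS l) (n : nat) : (forall i, (i <= n)%nat -> measurable (P i)) ->
  forall E, gen_sigma (FP P n) E -> measurable E.
Proof.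
  intros HP E H; induction H as [E [k [i [hi HE]]]|E _ IH|E _ IH].
  - apply (gs_ext _ _ _ (meas_preim k _ (HP i hi))); intros s; rewrite HE; tauto.
  - apply meas_compl; auto.
  - apply gs_union; auto.
Qed.

Lemma genP_P {l : nat} (P : nat -> SetS l) (n i : nat) : (i <= n)%nat -> gen_sigma (FP P n) (P i).
Proof.
  intros hi; apply gs_base; exists 0%nat, i; split; auto; intros s; unfold preim_shift; rewrite shift0; tauto.
Qed.

Lemma genP_preim {l : nat} (P : nat -> SetS l) (n j : nat) (E : SetS l) :
  gen_sigma (FP P n) E -> gen_sigma (FP P n) (preim_shift j E).
Proof.
  intros H; induction H as [E [k [i [hi HE]]]|E _ IH|E _ IH].
  - apply gs_base; exists (k + j)%nat, i; split; auto; intros s; unfold preim_shift.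
    rewrite HE; unfold preim_shift; rewrite shift_shift; tauto.
  - apply (gs_ext _ _ _ (gs_compl _ _ IH)); unfold preim_shift; tauto.
  - apply (gs_ext _ _ _ (gs_union _ _ IH)); unfold preim_shift; tauto.
Qed.

Lemma genP_cond {l : nat} (P : nat -> SetS l) (n i : nat) (C : Prop) :
  gen_sigma (FP P n) (fun s => ((i <= n)%nat /\ C) /\ P i s).
Proof.
  destruct (classic ((i <= n)%nat /\ C)) as [HC|HC].
  - apply (gs_ext _ (P i)); [apply genP_P; tauto| tauto].
  - apply (gs_ext _ (fun _ => False)); [eapply gs_empty, (genP_P P n 0); lia| tauto].
Qed.

Lemma meas_cond {l : nat} (P : nat -> SetS l) (n i : nat) (C : Prop) :
  (forall i, (i <= n)%nat -> measurable (P i)) ->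
  measurable (fun s => ((i <= n)%nat /\ C) /\ P i s).
Proof. intros HP; apply (genP_meas P n HP), genP_cond. Qed.

Lemma generating_part (l : nat) (Q : nat -> nat -> R) (p : nat -> R) (m : SetS l -> R)
  (Hm : markov_measure l Q p m) (n : nat) (P : nat -> SetS l) (HP : meas_partition P n)
  (H1 : forall i, (i <= n)%nat ->
          (exists a, (a <= l)%nat /\ forall s, P i s -> cyl (a :: nil) s)
          \/ ((forall s, preim_shift 1 (P i) s <-> P i s) /\ m (P i) = 0)) :
  generating m P n.
Proof.
  destruct HP as [HPm [HPd HPc]].
  set (Y := fun a : nat => fun s => exists i, ((i <= n)%nat /\ (forall s', P i s' -> cyl (a :: nil) s')) /\ P i s).
  set (Zc := fun i => (forall s, preim_shift 1 (P i) s <-> P i s) /\ m (P i) = 0).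
  set (Z := fun s => exists i, ((i <= n)%nat /\ Zc i) /\ P i s).
  assert (HY : forall a, gen_sigma (FP P n) (Y a)).
  { intros a; apply gs_union; intros i; apply genP_cond. }
  assert (HZm : measurable Z) by (apply gs_union; intros i; apply meas_cond; auto).
  assert (HZ0 : m Z = 0).
  { apply (null_union _ _ _ _ _ Hm); [intros i; apply meas_cond; auto|].
    intros i; destruct (classic ((i <= n)%nat /\ Zc i)) as [[hi hz]|hn]; [pose proof (proj2 hz) as h0|].
    - rewrite <- h0; f_equal; apply set_ext; intros s; tauto.
    - apply (m_empty' _ _ _ _ _ Hm); tauto. }
  assert (HZs : forall j s, Z (shift j s) -> Z s).
  { intros j s [i [[hi hz] hp]]; exists i; split; [split; auto|]. apply (inv_iter (P i) (proj1 hz) j s hp). }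
  assert (HYC : forall a s, Y a s -> cyl (a :: nil) s).
  { intros a s [i [[_ h] hp]]; auto. }
  assert (HCY : forall a s, cyl (a :: nil) s -> ~ Y a s -> Z s).
  { intros a s hc hy. destruct (HPc s) as [i [hi hp]]. exists i; split; auto; split; auto.
    destruct (H1 i hi) as [[a' [ha' hs]]|hz]; auto. exfalso; apply hy; exists i; split; auto; split; auto.
    intros s' hs'. pose proof (hs s' hs'). pose proof (hs s hp). rewrite cyl_one in *. congruence. }
  assert (Hnull : forall A : SetS l, measurable A -> (forall s, A s -> Z s) -> m A = 0).
  { intros A HA Hs. pose proof (m_mono _ _ _ _ A Z Hm HA HZm Hs). pose proof (proj1 Hm A HA); lra. }
  assert (Hsd : forall A B : SetS l, measurable A -> measurable B -> measurable (symdiff A B)).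
  { intros A B HA HB; unfold symdiff; apply meas_union2; apply meas_inter; auto; apply meas_compl; auto. }
  intros B HB. induction HB as [B [w Hw]|B HB IH|B HB IH].
  - set (G := fun s => forall j, (j < length w)%nat -> preim_shift j (Y (nth j w 0%nat)) s).
    assert (HG : gen_sigma (FP P n) G).
    { apply gs_fininter; intros; apply genP_preim; auto. }
    exists G; split; auto. apply Hnull.
    + apply Hsd; [apply (genP_meas P n HPm); auto| apply gs_base; exists w; auto].
    + intros s [[hg hb]|[hb hg]]; rewrite Hw in hb; unfold cyl in hb.
      * apply NNPP; intros hz; apply hb; intros j hj. apply NNPP; intros hne.
        pose proof (hg j hj) as hy. unfold preim_shift in hy.
        pose proof (HYC _ _ hy) as hc; rewrite cyl_one in hc. apply hne; exact hc.
      * apply NNPP; intros hz; apply hg; intros j hj. apply NNPP; intros hy.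
        apply hz, (HZs j). apply (HCY (nth j w 0%nat)); auto. rewrite cyl_one; apply hb; auto.
  - destruct IH as [A' [HA' HA0]]. exists (fun s => ~ A' s); split; [apply gs_compl; auto|].
    rewrite <- HA0; f_equal; apply set_ext; intros s; unfold symdiff; tauto.
  - pose (f := fun k => proj1_sig (constructive_indefinite_description _ (IH k))).
    assert (Hf : forall k, gen_sigma (FP P n) (f k) /\ m (symdiff (f k) (B k)) = 0).
    { intros k; unfold f; destruct (constructive_indefinite_description _ (IH k)); auto. }
    exists (fun s => exists k, f k s); split; [apply gs_union; intros k; apply Hf|].
    assert (Hfm : forall k, measurable (f k)) by (intros k; apply (genP_meas P n HPm), Hf).
    assert (HW : m (fun s => exists k, symdiff (f k) (B k) s) = 0).
    { apply (null_union _ _ _ _ _ Hm); [intros k; apply Hsd; [apply Hfm| apply HB]| intros k; apply Hf]. }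
    pose proof (m_mono _ _ _ _ (symdiff (fun s => exists k, f k s) (fun s => exists k, B k s))
      (fun s => exists k, symdiff (f k) (B k) s) Hm) as Hmono.
    assert (0 <= m (symdiff (fun s => exists k, f k s) (fun s => exists k, B k s))).
    { apply (proj1 Hm), Hsd; apply gs_union; [apply Hfm| apply HB]. }
    assert (m (symdiff (fun s => exists k, f k s) (fun s => exists k, B k s)) <= 0).
    { rewrite <- HW; apply Hmono.
      - apply Hsd; apply gs_union; [apply Hfm| apply HB].
      - apply gs_union; intros k; apply Hsd; [apply Hfm| apply HB].
      - intros s [[[k hk] hn]|[[k hk] hn]]; exists k; unfold symdiff; [left|right]; split; auto;
          intros h; apply hn; eauto. }
    lra.
Qed.

Lemma itin_S {l : nat} (P : nat -> SetS l) idx N s :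
  itin P idx (S N) s <-> itin P idx N s /\ P (idx N) (shift N s).
Proof.
  unfold itin; split.
  - intros H; split; auto.
  - intros [H h] t ht; destruct (Nat.eq_dec t N) as [->|]; auto; apply H; lia.
Qed.

Lemma itin_le {l : nat} (P : nat -> SetS l) idx N N' s : (N' <= N)%nat ->
  itin P idx N s -> itin P idx N' s.
Proof. intros h H t ht; apply H; lia. Qed.

Lemma meas_itin {l : nat} (P : nat -> SetS l) (n : nat) idx N :
  (forall i, (i <= n)%nat -> measurable (P i)) -> (forall t, (t < N)%nat -> (idx t <= n)%nat) ->
  measurable (itin P idx N).
Proof.
  intros HP; induction N as [|N IH]; intros Hi.
  - apply (gs_ext _ _ _ (@meas_full l)); intros s; split; auto; intros _ t ht; lia.
  - apply (gs_ext _ (fun s => itin P idx N s /\ preim_shift N (P (idx N)) s)).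
    + apply meas_inter; [apply IH; intros; apply Hi; lia| apply meas_preim, HP, Hi; lia].
    + intros s; rewrite itin_S; tauto.
Qed.

Definition rep {l : nat} (P : nat -> SetS l) idx (K : nat) (w : list nat) :=
  length w = K /\ (forall x, In x w -> (x <= l)%nat) /\
  forall s, itin P idx (S K) s <-> cyl w s /\ P (idx K) (shift K s).

Lemma rep0 {l : nat} (P : nat -> SetS l) idx : rep P idx 0 nil.
Proof.
  split; [auto|split; [intros x []|]]. intros s; unfold itin; split.
  - intros H; split; [apply cyl_nil| apply H; lia].
  - intros [_ H] t ht; replace t with 0%nat by lia; auto.
Qed.

Lemma rep_step {l : nat} (P : nat -> SetS l) idx K w a : rep P idx K w -> (a <= l)%nat ->
  (forall s, inter (P (idx K)) (preim_shift 1 (P (idx (S K)))) s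
                       <-> inter (cyl (a :: nil)) (preim_shift 1 (P (idx (S K)))) s) ->
  rep P idx (S K) (w ++ a :: nil).
Proof.
  intros [Hl [Hw Hr]] ha Hp; split; [rewrite length_app, Hl; simpl; lia|split].
  - intros x hx; apply in_app_or in hx; destruct hx as [hx|[hx|[]]]; subst; auto.
  - intros s. rewrite itin_S, Hr, <- cyl_app, Hl.
    specialize (Hp (shift K s)); unfold inter, preim_shift in Hp; rewrite shift_shift in Hp.
    replace (1 + K)%nat with (S K) in Hp by lia. tauto.
Qed.

Lemma scaleK (l : nat) Q p (m : SetS l -> R) (a0 : nat) (w' : list nat) (a : nat) (X : SetS l) :
  markov_measure l Q p m -> (forall x, 0 < p x) ->
  (forall x, In x (a0 :: w') -> (x <= l)%nat) -> (a <= l)%nat -> measurable X ->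
  (forall s, X s -> cyl (a :: nil) s) ->
  m (fun s => cyl (a0 :: w') s /\ X (shift (length (a0 :: w')) s))
  = (p a0 * chain Q a0 w' * Q (last w' a0) a / p a) * m X.
Proof.
  intros Hm Hp Hw Ha HX HXa.
  rewrite <- (set_ext (fun s => cyl (a :: nil) s /\ X s) X) by (intros s; split; [tauto| intros h; split; auto]).
  rewrite <- (set_ext (fun s => cyl (a :: nil) s /\ X s) X); [|intros s; split; [tauto| intros h; split; auto]].
  rewrite <- keyK; auto. apply meas_inter; auto; apply meas_cyl.
Qed.

Lemma markov_part (l : nat) (Q : nat -> nat -> R) (p : nat -> R) (m : SetS l -> R)
  (Hp : stationary_pos l Q p) (Hm : markov_measure l Q p m)
  (n : nat) (P : nat -> SetS l) (HP : meas_partition P n)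
  (H1 : forall i, (i <= n)%nat ->
          (exists a, (a <= l)%nat /\ forall s, P i s -> cyl (a :: nil) s)
          \/ ((forall s, preim_shift 1 (P i) s <-> P i s) /\ m (P i) = 0))
  (H2 : forall i j, (i <= n)%nat -> (j <= n)%nat ->
          (exists a, (a <= l)%nat /\
             forall s, inter (P i) (preim_shift 1 (P j)) s
                       <-> inter (cyl (a :: nil)) (preim_shift 1 (P j)) s)
          \/ m (inter (P i) (preim_shift 1 (P j))) = 0) :
  markov_property m P n.
Proof.
  destruct HP as [HPm [_ _]].
  assert (Hpp : forall x, (x <= l)%nat -> 0 < p x) by apply Hp.
  (* p may be nonpositive outside [0,l]; modify: use a positive surrogate *)
  set (p' := fun x => if le_dec x l then p x else 1).
  assert (Hp' : forall x, 0 < p' x) by (intros x; unfold p'; destruct (le_dec x l); auto; lra).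
  assert (Hpe : forall x, (x <= l)%nat -> p' x = p x) by (intros x hx; unfold p'; destruct (le_dec x l); auto; lia).
  assert (Hm' : markov_measure l Q p' m).
  { destruct Hm as [Ha [Hb Hc]]; split; [auto|split; [auto|]].
    intros w hw hin; rewrite Hc; auto. destruct w as [|x w]; [congruence|simpl]. rewrite Hpe; auto; apply hin; left; auto. }
  clear Hp Hpp Hpe.
  assert (Hmeas : forall A, measurable A -> 0 <= m A) by apply Hm'.
  assert (Hnull : forall K w b X, (length w = K) -> (forall x, In x w -> (x <= l)%nat) -> (b <= n)%nat ->
     measurable X -> (forall s, X s -> P b s) -> m X = 0 ->
     m (fun s => cyl w s /\ X (shift K s)) = 0).
  { intros K w b X hl hw hb hX hXP hX0.
    assert (HS : measurable (fun s => cyl w s /\ X (shift K s))) by (apply meas_inter; [apply meas_cyl| apply (meas_preim K X hX)]).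
    destruct w as [|a0 w'].
    - simpl in hl; subst K. rewrite <- hX0; f_equal; apply set_ext; intros s; rewrite shift0; split; [tauto| split; auto; apply cyl_nil].
    - subst K. destruct (H1 b hb) as [[a [ha hs]]|[hinv hz]].
      + rewrite (scaleK l Q p' m a0 w' a X); auto. rewrite hX0; ring.
      + pose proof (m_mono _ _ _ _ _ (P b) Hm' HS (HPm b hb)) as hmono.
        pose proof (Hmeas _ HS). rewrite hz in hmono.
        assert (Hsb : forall s, cyl (a0 :: w') s /\ X (shift (length (a0 :: w')) s) -> P b s).
        { intros s [_ h]; apply (inv_iter (P b) hinv (length (a0 :: w'))); auto. }
        specialize (hmono Hsb); lra. }
  intros N idx HN Hidx Hpos.
  destruct N as [|K]; [lia|]. replace (S K - 1)%nat with K by lia.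
  assert (HmI : forall N', (N' <= S K)%nat -> measurable (itin P idx N')).
  { intros N' hN; apply (meas_itin P n); auto; intros t ht; apply Hidx; lia. }
  assert (Hrep : forall K', (K' <= K)%nat -> exists w, rep P idx K' w).
  { induction K' as [|K' IH]; intros hK; [exists nil; apply rep0|].
    destruct (IH ltac:(lia)) as [w Hw].
    destruct (H2 (idx K') (idx (S K')) ltac:(apply Hidx; lia) ltac:(apply Hidx; lia)) as [[a [ha hs]]|h0].
    - exists (w ++ a :: nil); apply rep_step; auto.
    - exfalso. destruct Hw as [hl [hw hr]].
      set (X := inter (P (idx K')) (preim_shift 1 (P (idx (S K'))))).
      assert (HX : measurable X) by (apply meas_inter; [apply HPm, Hidx; lia| apply meas_preim, HPm, Hidx; lia]).
      pose proof (Hnull K' w (idx K') X hl hw ltac:(apply Hidx; lia) HX ltac:(intros s [h _]; auto) h0) as Hz.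
      assert (Hsub : forall s, itin P idx (S K) s -> cyl w s /\ X (shift K' s)).
      { intros s hs. pose proof (itin_le P idx (S K) (S (S K')) s ltac:(lia) hs) as hs'.
        rewrite itin_S, hr in hs'. destruct hs' as [[hc hb] hb2]; split; auto; split; auto.
        unfold preim_shift; rewrite shift_shift; replace (1 + K')%nat with (S K') by lia; auto. }
      pose proof (m_mono _ _ _ _ _ _ Hm' (HmI (S K) (le_n _))
        ltac:(apply meas_inter; [apply meas_cyl| apply (meas_preim K' X HX)]) Hsub). unfold preim_shift in H. lra. }
  destruct (Hrep K (le_n K)) as [w [hl [hw hr]]].
  set (b := idx K). set (c := idx (S K)).
  assert (hb : (b <= n)%nat) by (apply Hidx; lia).
  assert (hc : (c <= n)%nat) by (apply Hidx; lia).
  set (X := inter (P b) (preim_shift 1 (P c))).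
  assert (HX : measurable X) by (apply meas_inter; [apply HPm; auto| apply meas_preim, HPm; auto]).
  assert (E1 : itin P idx (S K) = fun s => cyl w s /\ P b (shift K s)) by (apply set_ext; exact hr).
  assert (E2 : itin P idx (S (S K)) = fun s => cyl w s /\ X (shift K s)).
  { apply set_ext; intros s; rewrite itin_S, hr. unfold X, inter, preim_shift; rewrite shift_shift.
    replace (1 + K)%nat with (S K) by lia; fold b c; tauto. }
  rewrite E1 in Hpos |- *; rewrite E2. fold b c X.
  destruct w as [|a0 w'].
  - simpl in hl; subst K.
    rewrite (set_ext (fun s => cyl nil s /\ P b (shift 0 s)) (P b)) by (intros s; rewrite shift0; split; [tauto| split; auto; apply cyl_nil]).
    rewrite (set_ext (fun s => cyl nil s /\ X (shift 0 s)) X) by (intros s; rewrite shift0; split; [tauto| split; auto; apply cyl_nil]).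
    reflexivity.
  - subst K. destruct (H1 b hb) as [[a [ha hs]]|[hinv hz]].
    + rewrite !(scaleK l Q p' m a0 w' a); auto.
      2:{ intros s hx; exact (hs s (proj1 hx)). }
      rewrite (scaleK l Q p' m a0 w' a) in Hpos; auto.
      set (cc := p' a0 * chain Q a0 w' * Q (last w' a0) a / p' a) in *.
      assert (cc <> 0) by (intros h; rewrite h in Hpos; lra).
      assert (m (P b) <> 0) by (intros h; rewrite h in Hpos; lra).
      field; auto.
    + exfalso. assert (Hsub : forall s, cyl (a0 :: w') s /\ P b (shift (length (a0 :: w')) s) -> P b s).
      { intros s [_ h]; apply (inv_iter (P b) hinv _ _ h). }
      pose proof (m_mono _ _ _ _ _ _ Hm' (meas_inter _ _ (meas_cyl (a0 :: w')) (meas_preim (length (a0 :: w')) (P b) (HPm b hb))) (HPm b hb) Hsub).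
      unfold preim_shift in H. lra.
Qed.

Theorem lemma4 (l : nat) (Q : nat -> nat -> R) (p : nat -> R) (m : SetS l -> R)
  (HQ : stochastic l Q) (Hp : stationary_pos l Q p) (Hm : markov_measure l Q p m)
  (n : nat) (P : nat -> SetS l) (HP : meas_partition P n)
  (H1 : forall i, (i <= n)%nat ->
          (exists a, (a <= l)%nat /\ forall s, P i s -> cyl (a :: nil) s)
          \/ ((forall s, preim_shift 1 (P i) s <-> P i s) /\ m (P i) = 0))
  (H2 : forall i j, (i <= n)%nat -> (j <= n)%nat ->
          (exists a, (a <= l)%nat /\
             forall s, inter (P i) (preim_shift 1 (P j)) s
                       <-> inter (cyl (a :: nil)) (preim_shift 1 (P j)) s)
          \/ m (inter (P i) (preim_shift 1 (P j))) = 0) :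
  generating m P n /\ markov_property m P n.
Proof.
  split.
  - eapply generating_part; eauto.
  - eapply markov_part; eauto.
Qed.
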